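(* Consider the system $\Sigma$, let $d:=\dim\ker D$, and suppose $\dim\mathcal{U}_{\rm imp}=f$ (where $f\ge 1$). Let $N$ be a matrix whose columns form a basis of $\ker\mathcal{M}_{f-d+1}$. Then: 1. $\mathcal{R}_s=\operatorname{img}\big(\begin{bmatrix}B&AB&\cdots&A^{f-d}B\end{bmatrix}N\big)$; 2. $\dim\mathcal{R}_s=f$.
   Context: $\Sigma$ is the system $\dot x=Ax+Bu$, $y=Cx+Du$ with $A\in\mathbb{R}^{n\times n}$, $B\in\mathbb{R}^{n\times m}$, $C\in\mathbb{R}^{p\times n}$, $D\in\mathbb{R}^{p\times m}$, transfer matrix $G(s)=C(sI_n-A)^{-1}B+D$. Impulsive-smooth inputs are distributions $u=u_{\rm reg}+\sum_{i=0}^k a_i\delta^{(i)}$ with $u_{\rm reg}$ the restriction to $\mathbb{R}_+$ of a $C^\infty(\mathbb{R},\mathbb{R}^m)$ function and $a_i\in\mathbb{R}^m$. A state $x_1\in\mathbb{R}^n$ is strongly reachable if there is an impulsive-smooth input $u$ such that the state trajectory from $x(0^-)=0$ satisfies $x(0^+)=x_1$ and the output is impulse-free (restriction to $\mathbb{R}_+$ of a $C^\infty$ function); the set of such states is the strongly reachable subspace $\mathcal{R}_s$. It is known (Hautus–Silverman) that $\mathcal{R}_s$ equals the stationary value of the nondecreasing sequence $\mathcal{R}_0=\{0\}$, $\mathcal{R}_{i+1}=\{Aw+B\alpha : w\in\mathcal{R}_i,\ \alpha\in\mathbb{R}^m,\ Cw+D\alpha=0\}$ (if $\mathcal{R}_{i+1}=\mathcal{R}_i$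 then $\mathcal{R}_s=\mathcal{R}_i$). An input $\sum_{i=0}^k u_i\delta^{(i)}$ ($u_i\in\mathbb{R}^m$) is an admissible impulsive input if the output from zero initial state is impulse-free, equivalently $G(s)\sum_i u_is^i$ is strictly proper; these form the vector space $\mathcal{U}_{\rm imp}$. For $k\ge1$, $\mathcal{M}_k$ is the $k\times k$ block matrix (blocks $p\times m$) whose $(i,j)$ block is $0$ if $i+j\le k$, $D$ if $i+j=k+1$, and $CA^{i+j-k-2}B$ if $i+j\ge k+2$ (so $\mathcal{M}_1=D$). *)

(* Defs.v *)
From HB Require Import structures.
From mathcomp Require Import all_boot all_order all_algebra.
From mathcomp Require Import reals.
Set Implicit Arguments. Unset Strict Implicit. Unset Printing Implicit Defensive.
Import Order.TTheory GRing.Theory Num.Theory.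
Local Open Scope ring_scope.

Section SystemDefs.
Variable R : fieldType.

Definition polmx a b (M : 'M[R]_(a, b)) : 'M[{poly R}]_(a, b) := map_mx polyC M.

(* Numerator of G(s) u(s), where G(s) = C (sI - A)^{-1} B + D and
   (sI - A)^{-1} = adj(sI - A) / det(sI - A) (Cramer's rule):
   G(s) u(s) = tf_num A B C D u / char_poly A. *)
Definition tf_num n m p (A : 'M[R]_n) (B : 'M[R]_(n, m)) (C : 'M[R]_(p, n))
  (D : 'M[R]_(p, m)) (u : 'cV[{poly R}]_m) : 'cV[{poly R}]_p :=
  polmx C *m \adj (char_poly_mx A) *m polmx B *m u
  + char_poly A *: (polmx D *m u).

(* An impulsive input u = sum_i u_i delta^(i) is encoded by the polynomial
   vector u(s) = sum_i u_i s^i.  It is admissible iff G(s) u(s) is strictly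
   proper: every entry num_i / char_poly A has deg num_i < deg char_poly A. *)
Definition U_imp n m p (A : 'M[R]_n) (B : 'M[R]_(n, m)) (C : 'M[R]_(p, n))
  (D : 'M[R]_(p, m)) (u : 'cV[{poly R}]_m) : Prop :=
  forall i : 'I_p, (size (tf_num A B C D u i ord0) < size (char_poly A))%N.

Definition pvdim m (S : 'cV[{poly R}]_m -> Prop) (f : nat) : Prop :=
  exists b : 'I_f -> 'cV[{poly R}]_m,
    [/\ forall i, S (b i),
        forall c : 'I_f -> R, \sum_i (c i)%:P *: b i = 0 -> forall i, c i = 0
      & forall u, S u -> exists c : 'I_f -> R, u = \sum_i (c i)%:P *: b i].

Definition vdim k (S : 'cV[R]_k -> Prop) (f : nat) : Prop :=
  exists b : 'I_f -> 'cV[R]_k,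
    [/\ forall i, S (b i),
        forall c : 'I_f -> R, \sum_i c i *: b i = 0 -> forall i, c i = 0
      & forall u, S u -> exists c : 'I_f -> R, u = \sum_i c i *: b i].

Fixpoint Rseq n m p (A : 'M[R]_n) (B : 'M[R]_(n, m)) (C : 'M[R]_(p, n))
  (D : 'M[R]_(p, m)) (i : nat) (x : 'cV[R]_n) : Prop :=
  match i with
  | 0 => x = 0
  | i'.+1 => exists (w : 'cV[R]_n) (alpha : 'cV[R]_m),
      [/\ Rseq A B C D i' w, C *m w + D *m alpha = 0 & x = A *m w + B *m alpha]
  end.

(* Strongly reachable subspace = stationary value of the nondecreasing
   sequence, i.e. its union. *)
Definition Rs n m p (A : 'M[R]_n) (B : 'M[R]_(n, m)) (C : 'M[R]_(p, n))
  (D : 'M[R]_(p, m)) (x : 'cV[R]_n) : Prop := exists i, Rseq A B C D i x.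

Definition Mk n m p (A : 'M[R]_n) (B : 'M[R]_(n, m)) (C : 'M[R]_(p, n))
  (D : 'M[R]_(p, m)) (k : nat) :
  'M[R]_((\sum_(i < k) p)%N, (\sum_(j < k) m)%N) :=
  @mxblock R k k (fun _ => p) (fun _ => m) (fun (i j : 'I_k) =>
    if ((i + j).+2 <= k)%N then 0
    else if (i + j).+1 == k then D
    else C *m A ^+ (i + j - k)%N *m B).

Definition ctrbk n m (A : 'M[R]_n) (B : 'M[R]_(n, m)) (k : nat) :
  'M[R]_(n, (\sum_(j < k) m)%N) :=
  @mxrow R k (fun _ => m) n (fun j => A ^+ j *m B).

Definition col_basis_ker r c q (M : 'M[R]_(r, c)) (N : 'M[R]_(c, q)) : Prop :=
  [/\ M *m N = 0,
      forall w : 'cV[R]_q, N *m w = 0 -> w = 0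
    & forall v : 'cV[R]_c, M *m v = 0 -> exists w : 'cV[R]_q, v = N *m w].

End SystemDefs.

(* Main.v *)
Require Import Defs.
From HB Require Import structures.
From mathcomp Require Import all_boot all_order all_algebra.
From mathcomp Require Import reals.
From mathcomp Require Import zify.
From Stdlib Require Import Classical ClassicalEpsilon.
Set Implicit Arguments. Unset Strict Implicit. Unset Printing Implicit Defensive.
Import Order.TTheory GRing.Theory Num.Theory.
Local Open Scope ring_scope.
Section Seqs.
Variable R : fieldType.
Variables (n m p : nat) (A : 'M[R]_n) (B : 'M[R]_(n,m)) (C : 'M[R]_(p,n)) (D : 'M[R]_(p,m)).

Fixpoint Phi k (v : nat -> 'cV[R]_m) : 'cV[R]_n :=
  if k is k'.+1 then B *m v 0%N + A *m Phi k' (fun i => v i.+1) else 0.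
Fixpoint adm k (v : nat -> 'cV[R]_m) : Prop :=
  if k is k'.+1 then D *m v 0%N + C *m Phi k' (fun i => v i.+1) = 0
                     /\ adm k' (fun i => v i.+1) else True.

Lemma Phi_ext k v w : (forall j, v j = w j) -> Phi k v = Phi k w.
Proof. by elim: k v w => //= k IH v w e; rewrite e (IH _ (fun i => w i.+1)). Qed.

Lemma adm_ext k v w : (forall j, v j = w j) -> adm k v <-> adm k w.
Proof.
elim: k v w => //= k IH v w e; rewrite e (Phi_ext _ (fun j => e j.+1)).
by rewrite (IH _ (fun i => w i.+1)).
Qed.

Lemma Phi0 k v : (forall j, v j = 0) -> Phi k v = 0.
Proof.
elim: k v => //= k IH v e; rewrite e IH //; by rewrite !mulmx0 addr0.
Qed.

Lemma adm0 k v : (forall j, v j = 0) -> adm k v.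
Proof.
elim: k v => //= k IH v e; rewrite e Phi0 // !mulmx0 addr0; split=> //; exact: IH.
Qed.

Lemma Phi_pad k K v : (forall j, (k <= j)%N -> v j = 0) -> (k <= K)%N ->
  Phi K v = Phi k v.
Proof.
elim: k K v => [|k IH] K v Hv hk.
  by rewrite Phi0 // => j; apply: Hv.
case: K hk => // K hk /=.
by rewrite (IH K) // => j hj; apply: Hv.
Qed.

Lemma adm_pad k K v : (forall j, (k <= j)%N -> v j = 0) -> (k <= K)%N ->
  adm K v <-> adm k v.
Proof.
elim: k K v => [|k IH] K v Hv hk.
  by split=> // _; apply: adm0 => j; apply: Hv.
case: K hk => // K hk /=.
rewrite (Phi_pad (k:=k)) //; last by move=> j hj; apply: Hv.
by rewrite (IH K) // => j hj; apply: Hv.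
Qed.

Lemma Phi_lin (I : finType) (c : I -> R) k (w : I -> nat -> 'cV[R]_m) :
  Phi k (fun j => \sum_i c i *: w i j) = \sum_i c i *: Phi k (w i).
Proof.
elim: k w => [|k IH] w /=; first by rewrite big1 // => i _; rewrite scaler0.
rewrite (IH (fun i j => w i j.+1)) mulmx_sumr mulmx_sumr -big_split /=.
by apply: eq_bigr => i _; rewrite scalerDr -!scalemxAr.
Qed.

Lemma RseqE k x : Rseq A B C D k x <-> exists v, adm k v /\ x = Phi k v.
Proof.
elim: k x => [|k IH] x /=.
  by split=> [->|[v [_ ->]]] //; exists (fun _ => 0).
split.
  move=> [w [al [/IH [v [av ->]] e ->]]].
  exists (fun i => if i is i'.+1 then v i' else al) => /=.
  by rewrite addrC e addrC; split.
move=> [v [[e av] ->]]; exists (Phi k (fun i => v i.+1)), (v 0%N).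
split; [apply/IH; by exists (fun i => v i.+1) | by rewrite addrC | by rewrite addrC].
Qed.


Definition cond K (v : nat -> 'cV[R]_m) l : 'cV[R]_p :=
  D *m v l + \sum_(j < K | (l < j)%N) C *m A ^+ (j - l.+1) *m B *m v j.

Lemma PhiE K v : Phi K v = \sum_(j < K) A ^+ j *m B *m v j.
Proof.
elim: K v => [|K IH] v /=; first by rewrite big_ord0.
rewrite big_ord_recl /= expr0 mul1mx IH mulmx_sumr; congr (_ + _).
apply: eq_bigr => j _; rewrite exprS -mulmxE !mulmxA.
by [].
Qed.

Lemma cond_shift K v l : cond K.+1 v l.+1 = cond K (fun i => v i.+1) l.
Proof.
rewrite /cond; congr (_ + _).
rewrite big_mkcond big_ord_recl /= add0r -big_mkcond /=.
by apply: eq_bigl => j.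
Qed.

Lemma cond_0 K v : cond K.+1 v 0 = D *m v 0%N + C *m Phi K (fun i => v i.+1).
Proof.
rewrite /cond PhiE; congr (_ + _).
rewrite big_mkcond big_ord_recl /= add0r mulmx_sumr.
by apply: eq_bigr => j _ /=; rewrite subn1 /= !mulmxA.
Qed.

Lemma admE K v : adm K v <-> forall l, (l < K)%N -> cond K v l = 0.
Proof.
elim: K v => [|K IH] v /=; first by split.
rewrite IH -cond_0; split.
  by move=> [h0 h] [|l] hl //; rewrite cond_shift; apply: h.
move=> h; split; first exact: h.
by move=> l hl; rewrite -cond_shift; apply: h.
Qed.

Lemma Mk_mxcol K (v : nat -> 'cV[R]_m) :
  Mk A B C D K *m @mxcol R K (fun _ => m) 1 (fun j => v j)
  = @mxcol R K (fun _ => p) 1 (fun i => cond K v (K - i.+1)).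
Proof.
rewrite /Mk mul_mxblock_mxrow; apply: eq_mxcol => i.
have hi := ltn_ord i.
set l := (K - i.+1)%N.
have hl : (l < K)%N by rewrite /l; lia.
rewrite (bigID (fun j : 'I_K => (l < j)%N)) /= addrC /cond; congr (_ + _).
  rewrite (bigD1 (Ordinal hl)) /=; last by rewrite ltnn.
  rewrite ifF; last by apply/negbTE; rewrite /l; lia.
  rewrite ifT; last by apply/eqP; rewrite /l; lia.
  rewrite big1 ?addr0 // => j /andP [hj hj'].
  rewrite ifT ?mul0mx //.
  have : (nat_of_ord j != l) by exact: hj'.
  move: hj; rewrite /l; lia.
apply: eq_bigr => j hj.
rewrite ifF; last by apply/negbTE; move: hj; rewrite /l; lia.
rewrite ifF; last by apply/negbTE; move: hj; rewrite /l; lia.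
by congr (C *m A ^+ _ *m B *m _); move: hj; rewrite /l; lia.
Qed.


Lemma kerMk K (v : nat -> 'cV[R]_m) :
  Mk A B C D K *m @mxcol R K (fun _ => m) 1 (fun j => v j) = 0 <-> adm K v.
Proof.
rewrite Mk_mxcol admE; split.
  move=> h l hl; have hi : (K - l.+1 < K)%N by lia.
  have := congr1 (fun M => submxcol M (Ordinal hi)) h.
  rewrite mxcolK submxcol0 /=.
  by have -> : (K - (K - l.+1).+1 = l)%N by lia.
move=> h; rewrite -(mxcol0 (p_ := fun _ : 'I_K => p)); apply: eq_mxcol => i.
by apply: h; have := ltn_ord i; lia.
Qed.

Lemma ctrbk_mxcol K (v : nat -> 'cV[R]_m) :
  ctrbk A B K *m @mxcol R K (fun _ => m) 1 (fun j => v j) = Phi K v.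
Proof. by rewrite /ctrbk mul_mxrow_mxcol PhiE. Qed.

Definition cf (u : 'cV[{poly R}]_m) j : 'cV[R]_m := \col_r (u r 0)`_j.

Fixpoint pv k (v : nat -> 'cV[R]_m) : 'cV[{poly R}]_m :=
  if k is k'.+1 then polmx (v 0%N) + 'X *: pv k' (fun i => v i.+1) else 0.
Fixpoint Xp k (v : nat -> 'cV[R]_m) : 'cV[{poly R}]_n :=
  if k is k'.+1 then polmx (Phi k' (fun i => v i.+1)) + 'X *: Xp k' (fun i => v i.+1)
  else 0.

Lemma pv_ext k v w : (forall j, v j = w j) -> pv k v = pv k w.
Proof. by elim: k v w => //= k IH v w e; rewrite e (IH _ (fun i => w i.+1)). Qed.

Lemma cf_step q (c : 'cV[R]_q) (Y : 'cV[{poly R}]_q) j :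
  \col_r ((polmx c + 'X *: Y) r 0)`_j = if j is j'.+1 then \col_r (Y r 0)`_j' else c.
Proof.
apply/matrixP => r z; rewrite (ord1 z) !mxE coefD coefC coefXM.
by case: j => [|j] /=; rewrite ?add0r ?addr0 ?mxE.
Qed.

Lemma cf0_eq0 q (u : 'cV[{poly R}]_q) : (forall j, \col_r (u r 0)`_j = 0) -> u = 0.
Proof.
move=> h; apply/matrixP => r z; rewrite (ord1 z) mxE; apply/polyP => j.
by have /matrixP /(_ r 0) := h j; rewrite !mxE coef0.
Qed.

Lemma step_eq0 q (c : 'cV[R]_q) (Y : 'cV[{poly R}]_q) :
  polmx c + 'X *: Y = 0 <-> c = 0 /\ Y = 0.
Proof.
split; last by move=> [-> ->]; rewrite /polmx map_mx0 scaler0 addr0.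
move=> h; have e j : \col_r ((polmx c + 'X *: Y) r 0)`_j = 0.
  by rewrite h; apply/matrixP => r z; rewrite !mxE coef0.
split; first by have := e 0%N; rewrite cf_step.
by apply: cf0_eq0 => j; have := e j.+1; rewrite cf_step.
Qed.

Lemma cf_pv k v j : cf (pv k v) j = if (j < k)%N then v j else 0.
Proof.
elim: k v j => [|k IH] v j.
  by apply/matrixP => r z; rewrite !mxE coef0.
rewrite /= /cf cf_step; case: j => [|j] //=.
by rewrite -/(cf _ j) IH.
Qed.

Lemma pv_cf k u : (forall j, (k <= j)%N -> cf u j = 0) -> pv k (cf u) = u.
Proof.
elim: k u => [|k IH] u h /=.
  by apply/esym/cf0_eq0 => j; apply: h.
pose u' := map_mx (drop_poly 1) u.
have e j : cf u j.+1 = cf u' j.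
  by apply/matrixP => r z; rewrite !mxE coef_drop_poly addn1.
rewrite (pv_ext _ e) IH; last first.
  by move=> j hj; rewrite -e; apply: h.
apply/matrixP => r z; rewrite (ord1 z) !mxE; apply/polyP => j.
rewrite coefD coefC coefXM; case: j => [|j] /=; first by rewrite addr0.
by rewrite add0r coef_drop_poly addn1.
Qed.


Lemma polmxM a b c (M : 'M[R]_(a,b)) (N : 'M[R]_(b,c)) :
  polmx (M *m N) = polmx M *m polmx N.
Proof. exact: map_mxM. Qed.
Lemma polmxD a b (M N : 'M[R]_(a,b)) : polmx (M + N) = polmx M + polmx N.
Proof. exact: map_mxD. Qed.
Lemma polmx0 a b : polmx (0 : 'M[R]_(a,b)) = 0.
Proof. exact: map_mx0. Qed.

Lemma zmod_aux (V : zmodType) (a b c e : V) : a - b + (c - a) = e + c - (e + b).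
Proof.
rewrite addrC addrA addrNK opprD addrACA subrr add0r //.
Qed.

Lemma cpm_Xp k v :
  char_poly_mx A *m Xp k v = polmx B *m pv k v - polmx (Phi k v).
Proof.
elim: k v => [|k IH] v /=; first by rewrite mulmx0 mulmx0 polmx0 subrr.
rewrite mulmxDr -scalemxAr IH /char_poly_mx mulmxBl mul_scalar_mx.
rewrite mulmxDr -scalemxAr polmxD !polmxM scalerBr.
rewrite -[polmx A]/(map_mx polyC A).
exact: zmod_aux.
Qed.

Definition Pp k v := polmx C *m Xp k v + polmx D *m pv k v.

Lemma Pp_step k v : Pp k.+1 v =
  polmx (D *m v 0%N + C *m Phi k (fun i => v i.+1)) + 'X *: Pp k (fun i => v i.+1).
Proof.
rewrite /Pp /= !mulmxDr -!scalemxAr polmxD !polmxM scalerDr.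
by rewrite addrACA [polmx C *m _ + _]addrC.
Qed.

Lemma Pp_eq0 k v : Pp k v = 0 <-> adm k v.
Proof.
elim: k v => [|k IH] v; first by rewrite /Pp /= !mulmx0 addr0.
by rewrite Pp_step step_eq0 IH.
Qed.

Lemma tf_pv k v : tf_num A B C D (pv k v) =
  char_poly A *: Pp k v + polmx C *m \adj (char_poly_mx A) *m polmx (Phi k v).
Proof.
rewrite /tf_num -!mulmxA.
have -> : polmx B *m pv k v = char_poly_mx A *m Xp k v + polmx (Phi k v).
  by rewrite cpm_Xp subrK.
rewrite (mulmxDr (\adj _)) (mulmxA (\adj _)) mul_adj_mx mul_scalar_mx -/(char_poly A).
rewrite mulmxDr -scalemxAr /Pp scalerDr mulmxA.
by rewrite addrAC.
Qed.


Lemma size_sum_le (I : finType) (P : pred I) (F : I -> {poly R}) k :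
  (forall i, P i -> (size (F i) <= k)%N) -> (size (\sum_(i | P i) F i)%R <= k)%N.
Proof. by move=> h; apply: (leq_trans (size_sum _ _ _)); apply/bigmax_leqP. Qed.

Lemma det_size k (M : 'M[{poly R}]_k) :
  (forall i j, (size (M i j) <= 2)%N) -> (size (\det M) <= k.+1)%N.
Proof.
move=> h; rewrite /determinant; apply: size_sum_le => s _.
rewrite size_Msign; apply: (leq_trans (size_poly_prod_leq _ _)).
set c := #|_|.
have hc : c = k by rewrite /c cardT size_enum_ord.
rewrite hc.
apply: (@leq_trans ((\sum_(i < k) 2).+1 - k)%N).
  by apply: leq_sub2r; rewrite ltnS; apply: leq_sum => i _; apply: h.
rewrite sum_nat_const card_ord; lia.
Qed.

Lemma adj_size i j : (size (\adj (char_poly_mx A) i j) <= n)%N.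
Proof.
rewrite /adjugate mxE /cofactor size_Msign.
case: n A i j => [|n'] A' i j; first by case: i.
apply: det_size => a b; rewrite !mxE.
apply: (leq_trans (size_polyD _ _)); rewrite geq_max size_polyN size_polyC.
apply/andP; split; last by case: (_ != 0).
by case: (_ == _); rewrite /= ?mulr1n ?mulr0n ?size_polyX ?size_poly0.
Qed.

Lemma rem_size (w : 'cV[R]_n) r :
  (size ((polmx C *m \adj (char_poly_mx A) *m polmx w) r ord0) <= n)%N.
Proof.
rewrite mxE; apply: size_sum_le => l _; rewrite mxE mxE.
rewrite big_distrl /=; apply: size_sum_le => t _.
rewrite !mxE -mulrA mul_polyC; apply: (leq_trans (size_scale_leq _ _)).
rewrite mulrC mul_polyC; apply: (leq_trans (size_scale_leq _ _)).
by have := adj_size t l; rewrite mxE.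
Qed.

Lemma Uimp_pv k v : U_imp A B C D (pv k v) <-> adm k v.
Proof.
rewrite -Pp_eq0 /U_imp size_char_poly; split; last first.
  move=> h r; rewrite tf_pv h scaler0 add0r ltnS; exact: rem_size.
move=> h; apply/matrixP => r z; rewrite (ord1 z) [RHS]mxE.
set P := Pp k v.
apply/eqP/negPn/negP => hne.
have := h r; rewrite tf_pv -/P mxE [(_ *: P) _ _]mxE.
have hm : (n.+1 <= size (char_poly A * P r ord0)%R)%N.
  rewrite mulrC size_Mmonic ?char_poly_monic // size_char_poly.
  move: hne; rewrite -size_poly_eq0 => hne.
  have h0 : (size (P r ord0) != 0)%N := hne. by rewrite addnS /= -{1}[n]add0n ltn_add2r lt0n.
rewrite size_polyDl.
  by move=> h1; move/(leq_trans h1): hm; rewrite ltnn.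
apply: (@leq_ltn_trans n); first exact: rem_size.
exact: hm.
Qed.


Lemma bound (u : 'cV[{poly R}]_m) : exists k, forall j, (k <= j)%N -> cf u j = 0.
Proof.
exists (\max_(r < m) size (u r ord0)) => j hj.
apply/matrixP => r z; rewrite !mxE nth_default //.
apply: leq_trans hj; exact: (@leq_bigmax _ (fun r => size (u r ord0)) r).
Qed.

Lemma Uimp_cf u k : (forall j, (k <= j)%N -> cf u j = 0) ->
  U_imp A B C D u <-> adm k (cf u).
Proof. by move=> h; rewrite -Uimp_pv pv_cf. Qed.

Definition sh t (v : nat -> 'cV[R]_m) i := if (i < t)%N then 0 else v (i - t)%N.

Lemma pv_sh t k v : pv (t + k) (sh t v) = 'X^t *: pv k v.
Proof.
elim: t => [|t IH].
  by rewrite add0n expr0 scale1r; apply: pv_ext => j; rewrite /sh subn0.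
rewrite addSn /= /sh /= polmx0 add0r.
rewrite (pv_ext _ (w := sh t v)); last by move=> j; rewrite /sh ltnS subSS.
by rewrite IH scalerA -exprS.
Qed.

Lemma adm_sh t k v : adm k v -> Phi k v = 0 ->
  adm (t + k) (sh t v) /\ Phi (t + k) (sh t v) = 0.
Proof.
move=> ha hp; elim: t => [|t [IH1 IH2]].
  rewrite add0n; split.
    by apply/(adm_ext _ (w := v)) => // j; rewrite /sh subn0.
  by rewrite -hp; apply: Phi_ext => j; rewrite /sh subn0.
have e : forall j, sh t.+1 v j.+1 = sh t v j by move=> j; rewrite /sh ltnS subSS.
rewrite addSn /= (Phi_ext _ e) IH2 /sh /= !mulmx0 !addr0.
split=> //; exact/(adm_ext _ e).
Qed.

Lemma dep f (G : nat -> 'I_f -> R) : exists a : nat -> R,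
  (exists2 j, (j < f.+1)%N & a j != 0) /\
  forall i, \sum_(j < f.+1) a j * G j i = 0.
Proof.
pose M : 'M[R]_(f.+1, f) := \matrix_(j, i) G j i.
have hk : kermx M != 0.
  rewrite -mxrank_eq0 mxrank_ker; have := rank_leq_col M; lia.
case/rowV0Pn: hk => w /sub_kermxP hw hw0.
have [j hj] : exists j : 'I_f.+1, w 0 j != 0.
  apply/existsP; apply: contraR hw0 => /existsPn h.
  apply/eqP/matrixP => a b; rewrite (ord1 a) mxE; exact/eqP/negPn/h.
exists (fun j => if (j < f.+1)%N then w 0 (inord j) else 0); split.
  by exists j => //; rewrite ltn_ord inord_val.
move=> i; have /matrixP /(_ 0 i) := hw; rewrite !mxE => e; rewrite -[RHS]e.
by apply: eq_bigr => l _; rewrite ltn_ord inord_val mxE.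
Qed.

Lemma Phi_inj f : pvdim (U_imp A B C D) f ->
  forall k v, adm k v -> Phi k v = 0 -> forall j, (j < k)%N -> v j = 0.
Proof.
move=> [b [hb hind hspan]] k v ha hp.
set u := pv k v.
have hu t : U_imp A B C D ('X^t *: u).
  by rewrite /u -pv_sh Uimp_pv; case: (adm_sh t ha hp).
pose G t := proj1_sig (constructive_indefinite_description _ (hspan _ (hu t))).
have hG t : 'X^t *: u = \sum_i (G t i)%:P *: b i.
  exact: (proj2_sig (constructive_indefinite_description _ (hspan _ (hu t)))).
have [a [[j0 hj0 ha0] hs]] := dep G.
pose q := \poly_(j < f.+1) a j.
have hq : q != 0.
  apply/negP => /eqP hq0; move: ha0; have := coef_poly f.+1 a j0; rewrite -/q hq0 coef0 hj0 => <-; by rewrite eqxx.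
have hqu : q *: u = 0.
  rewrite /q poly_def scaler_suml.
  transitivity (\sum_(j < f.+1) (a j)%:P *: ('X^j *: u)).
    by apply: eq_bigr => j _; rewrite scalerA mul_polyC.
  under eq_bigr do rewrite hG scaler_sumr.
  rewrite exchange_big /=; apply: big1 => i _.
  under eq_bigr do rewrite scalerA -polyCM.
  by rewrite -scaler_suml -rmorph_sum /= hs scale0r.
have u0 : u = 0.
  apply/matrixP => r z; have /matrixP /(_ r z) := hqu; rewrite !mxE.
  by move/eqP; rewrite mulf_eq0 (negbTE hq) /= => /eqP.
move=> j hj; have := cf_pv k v j; rewrite hj -/u u0 => <-.
by apply/matrixP => r z; rewrite !mxE coef0.
Qed.


Lemma Phi_ext_lt k v w : (forall j, (j < k)%N -> v j = w j) -> Phi k v = Phi k w.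
Proof.
elim: k v w => //= k IH v w e; rewrite e //.
by rewrite (IH _ (fun i => w i.+1)) // => j hj; apply: e.
Qed.

Lemma adm_ext_lt k v w : (forall j, (j < k)%N -> v j = w j) -> adm k v <-> adm k w.
Proof.
elim: k v w => //= k IH v w e; rewrite e //.
rewrite (Phi_ext_lt (w := fun i => w i.+1)); last by move=> j hj; apply: e.
by rewrite (IH _ (fun i => w i.+1)) // => j hj; apply: e.
Qed.

Lemma adm_sum (I : finType) (c : I -> R) k (w : I -> nat -> 'cV[R]_m) :
  (forall i, adm k (w i)) -> adm k (fun j => \sum_i c i *: w i j).
Proof.
elim: k w => [|k IH] w h //=; split; last first.
  by apply: (IH (fun i j => w i j.+1)) => i; case: (h i).
rewrite (Phi_lin c k (fun i j => w i j.+1)) !mulmx_sumr -big_split /=.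
by apply: big1 => i _; rewrite -!scalemxAr -scalerDr; case: (h i) => -> _; rewrite scaler0.
Qed.

Definition bnd (u : 'cV[{poly R}]_m) := \max_(r < m) size (u r ord0).

Lemma bnd_ok u j : (bnd u <= j)%N -> cf u j = 0.
Proof.
move=> hj; apply/matrixP => r z; rewrite !mxE nth_default //.
apply: leq_trans hj; exact: (@leq_bigmax _ (fun r => size (u r ord0)) r).
Qed.

Lemma cf_lin (I : finType) (c : I -> R) (b : I -> 'cV[{poly R}]_m) j :
  cf (\sum_i (c i)%:P *: b i) j = \sum_i c i *: cf (b i) j.
Proof.
apply/matrixP => r z; rewrite !mxE summxE coef_sum summxE.
by apply: eq_bigr => i _; rewrite !mxE coefCM.
Qed.

Lemma Rseq_0 k : Rseq A B C D k 0.
Proof. by apply/RseqE; exists (fun _ => 0); split; [apply: adm0 | rewrite Phi0]. Qed.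

Lemma Phi_add k a v w : Phi k (fun j => a *: v j + w j) = a *: Phi k v + Phi k w.
Proof.
elim: k v w => [|k IH] v w /=; first by rewrite scaler0 addr0.
rewrite (IH (fun i => v i.+1) (fun i => w i.+1)) !mulmxDr -!scalemxAr.
by rewrite scalerDr addrACA.
Qed.

Lemma adm_add k a v w : adm k v -> adm k w -> adm k (fun j => a *: v j + w j).
Proof.
elim: k v w => [|k IH] v w //= [h1 h2] [h3 h4]; split; last exact: IH.
rewrite (Phi_add k a (fun i => v i.+1) (fun i => w i.+1)).
by rewrite !mulmxDr -!scalemxAr addrACA -scalerDr h1 h3 scaler0 addr0.
Qed.

Lemma Rseq_lin k a x y : Rseq A B C D k x -> Rseq A B C D k y ->
  Rseq A B C D k (a *: x + y).
Proof.
move=> /RseqE [v [hv ->]] /RseqE [w [hw ->]]; apply/RseqE.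
by exists (fun j => a *: v j + w j); rewrite Phi_add; split => //; apply: adm_add.
Qed.

Lemma Rseq_sum k r (c : nat -> R) (F : nat -> 'cV[R]_n) :
  (forall i, (i < r)%N -> Rseq A B C D k (F i)) ->
  Rseq A B C D k (\sum_(i < r) c i *: F i).
Proof.
elim: r => [|r IH] h; first by rewrite big_ord0; apply: Rseq_0.
rewrite big_ord_recr /= addrC; apply: Rseq_lin; first exact: h.
by apply: IH => i hi; apply: h; lia.
Qed.

Lemma Rseq_mono k x : Rseq A B C D k x -> Rseq A B C D k.+1 x.
Proof.
elim: k x => [|k IH] x /=.
  by move=> ->; exists 0, 0; split; rewrite ?mulmx0 ?addr0.
by move=> [w [al [hw e ->]]]; exists w, al; split => //; apply: IH.
Qed.

Lemma Rseq_monoN k k' x : (k <= k')%N -> Rseq A B C D k x -> Rseq A B C D k' x.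
Proof.
move=> /subnK <-; elim: (k' - k)%N => // t IH h; rewrite addSn.
by apply: Rseq_mono; apply: IH.
Qed.

Lemma Rseq_stat k : (forall x, Rseq A B C D k.+1 x -> Rseq A B C D k x) ->
  forall t x, Rseq A B C D (t + k) x -> Rseq A B C D k x.
Proof.
move=> h.
have g t : forall x, Rseq A B C D (t + k).+1 x -> Rseq A B C D (t + k) x.
  elim: t => [|t IH] x; first exact: h.
  rewrite addSn => /= [[w [al [hw e ->]]]]; exists w, al; split => //; exact: IH.
elim=> [|t IH] x //; rewrite addSn => hx; apply: IH; exact: g.
Qed.


Definition indep r (F : nat -> 'cV[R]_n) := forall c : nat -> R,
  \sum_(i < r) c i *: F i = 0 -> forall i, (i < r)%N -> c i = 0.

Lemma indep_le r s F : indep r F -> (s <= r)%N -> indep s F.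
Proof.
move=> h hs c hc i hi.
suff : (fun i => if (i < s)%N then c i else 0) i = 0 by rewrite /= hi.
have hir : (i < r)%N by lia.
apply: (h (fun i => if (i < s)%N then c i else 0) _ i hir).
rewrite -[RHS]hc (big_ord_widen r (fun i => c i *: F i) hs) [RHS]big_mkcond /=.
by apply: eq_bigr => j _; case: ifP => //; rewrite scale0r.
Qed.

Lemma no_indep (S : 'cV[R]_n -> Prop) f F : vdim S f ->
  (forall i, (i < f.+1)%N -> S (F i)) -> indep f.+1 F -> False.
Proof.
move=> [b [_ _ hspan]] hF hind.
have hc j : exists c : 'I_f -> R, (j < f.+1)%N -> F j = \sum_i c i *: b i.
  case: (boolP (j < f.+1)%N) => hj.
    by have [c e] := hspan _ (hF j hj); exists c.
  by exists (fun _ => 0).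
pose G j := proj1_sig (constructive_indefinite_description _ (hc j)).
have hG j : (j < f.+1)%N -> F j = \sum_i G j i *: b i.
  exact: (proj2_sig (constructive_indefinite_description _ (hc j))).
have [a [[j0 hj0 ha0] hs]] := dep G.
suff : a j0 = 0 by move/eqP; rewrite (negbTE ha0).
apply: (hind a) => //.
transitivity (\sum_(j < f.+1) \sum_i (a j * G j i) *: b i).
  by apply: eq_bigr => j _; rewrite hG // scaler_sumr; apply: eq_bigr => i _; rewrite scalerA.
rewrite exchange_big /=; apply: big1 => i _.
by rewrite -scaler_suml hs scale0r.
Qed.

Lemma indep_ext k r F t : indep r F ->
  (forall i, (i < r)%N -> Rseq A B C D k (F i)) -> ~ Rseq A B C D k t ->
  indep r.+1 (fun i => if i == r then t else F i).
Proof.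
move=> hind hF ht c hc.
rewrite big_ord_recr /= eqxx in hc.
have e : \sum_(i < r) c i *: (if nat_of_ord i == r then t else F i)
         = \sum_(i < r) c i *: F i.
  by apply: eq_bigr => i _; rewrite ltn_eqF.
rewrite e in hc.
have hcr : c r = 0.
  apply/eqP/negPn/negP => hne; apply: ht.
  have -> : t = (- (c r)^-1) *: \sum_(i < r) c i *: F i + 0.
    rewrite addr0; apply: (scalerI hne).
    rewrite scalerA mulrN mulfV // scaleN1r.
    by apply/eqP; rewrite -addr_eq0 addrC hc.
  by apply: Rseq_lin; [apply: Rseq_sum | apply: Rseq_0].
rewrite hcr scale0r addr0 in hc.
move=> i; rewrite ltnS leq_eqVlt => /orP [/eqP -> //|hi].
exact: hind.
Qed.

End Seqs.

Unset Implicit Arguments.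

Theorem mainTheorem4 (R : realType) (n m p : nat) (A : 'M[R]_n)
  (B : 'M[R]_(n, m)) (C : 'M[R]_(p, n)) (D : 'M[R]_(p, m)) (d f : nat) :
  vdim (fun v : 'cV[R]_m => D *m v = 0) d ->
  (0 < f)%N ->
  pvdim (U_imp A B C D) f ->
  forall (q : nat) (N : 'M[R]_((\sum_(j < (f - d).+1) m)%N, q)),
    col_basis_ker (Mk A B C D (f - d).+1) N ->
    (forall x : 'cV[R]_n,
        Rs A B C D x <-> exists w : 'cV[R]_q, x = ctrbk A B (f - d).+1 *m N *m w)
    /\ vdim (Rs A B C D) f.
Proof.
move=> hD hf0 hU q N [hMN hNinj hNspan].
have [b [hb hind hspan]] := hU.
pose K0 := (\max_(i < f) bnd (b i))%N.
have hK0 i j : (K0 <= j)%N -> cf (b i) j = 0.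
  move=> hj; apply: bnd_ok; apply: leq_trans hj.
  exact: (@leq_bigmax _ (fun i => bnd (b i)) i).
pose bR i := Phi A B K0 (cf (b i)).
have hbR i : Rs A B C D (bR i).
  exists K0; apply/RseqE; exists (cf (b i)); split=> //.
  by apply/(@Uimp_cf R n m p A B C D (b i) K0 (hK0 i)); exact: hb.
have hdim : vdim (Rs A B C D) f.
  exists bR; split => //.
    move=> c hc.
    set u := \sum_i (c i)%:P *: b i.
    have hcu j : cf u j = \sum_i c i *: cf (b i) j := cf_lin c b j.
    have hu0 j : (K0 <= j)%N -> cf u j = 0.
      by move=> hj; rewrite hcu big1 // => i _; rewrite hK0 // scaler0.
    have ha : adm A B C D K0 (cf u).
      apply/(adm_ext A B C D K0 hcu).
      apply: adm_sum => i; apply/(@Uimp_cf R n m p A B C D (b i) K0 (hK0 i)); exact: hb.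
    have hp : Phi A B K0 (cf u) = 0.
      by rewrite (Phi_ext A B K0 hcu) Phi_lin.
    have u0 : u = 0.
      apply: cf0_eq0 => j; case: (ltnP j K0) => hj.
        exact: (Phi_inj hU ha hp hj).
      exact: hu0.
    exact: hind u0.
  move=> x [k /RseqE [v [hv ->]]].
  set u := pv k v.
  have hu : U_imp A B C D u by apply/Uimp_pv.
  have [c hc] := hspan u hu.
  exists c.
  have hcu j : cf u j = \sum_i c i *: cf (b i) j by rewrite hc cf_lin.
  pose K' := maxn k K0.
  have e1 : Phi A B k v = Phi A B k (cf u).
    by apply: Phi_ext_lt => j hj; rewrite /u cf_pv hj.
  have hz : forall j, (k <= j)%N -> cf u j = 0.
    by move=> j hj; rewrite /u cf_pv ltnNge hj.
  rewrite e1 -(@Phi_pad R n m A B k K' (cf u) hz (leq_maxl _ _)).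
  rewrite (Phi_ext A B K' hcu) Phi_lin.
  apply: eq_bigr => i _; congr (_ *: _).
  exact: (@Phi_pad R n m A B K0 K' (cf (b i)) (hK0 i) (leq_maxr _ _)).
set K := (f - d).+1.
have [e [he heind _]] := hD.
pose F0 i := B *m oapp e 0 (insub i).
have hDe i : D *m oapp e 0 (insub i) = 0.
  by case: (insub i) => [j|] /=; [exact: he | rewrite mulmx0].
have hF0R i : Rseq A B C D 1 (F0 i).
  by exists 0, (oapp e 0 (insub i)); split; rewrite ?mulmx0 ?add0r.
have hF0i : indep d F0.
  move=> c hc.
  pose al := \sum_(i < d) c i *: e i.
  have hBal : B *m al = 0.
    rewrite -[RHS]hc /al mulmx_sumr; apply: eq_bigr => i _.
    by rewrite /F0 valK /= -scalemxAr.
  have hDal : D *m al = 0.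
    by rewrite /al mulmx_sumr big1 // => i _; rewrite -scalemxAr he scaler0.
  pose v j := if j == 0%N then al else 0.
  have hv : adm A B C D 1 v by rewrite /= /v /= hDal mulmx0 addr0.
  have hp : Phi A B 1 v = 0 by rewrite /= /v /= hBal mulmx0 addr0.
  have := Phi_inj hU hv hp (ltnSn 0); rewrite /v /= => hal0.
  move=> i hi; exact: (heind (fun i : 'I_d => c i) hal0 (Ordinal hi)).
have hdf : (d <= f)%N.
  rewrite leqNgt; apply/negP => hfd.
  apply: (no_indep hdim (F := F0)).
    by move=> i _; exists 1%N; exact: hF0R.
  exact: indep_le hF0i hfd.
have [j0 [hj0 hst]] : exists j, (j <= f - d)%N /\ forall x, Rseq A B C D j.+2 x -> Rseq A B C D j.+1 x.
  apply: NNPP => hno.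
  have hex j : (j <= f - d)%N -> exists t, Rseq A B C D j.+2 t /\ ~ Rseq A B C D j.+1 t.
    move=> hj; apply: NNPP => h2; apply: hno; exists j; split=> // x hx.
    by apply: NNPP => h3; apply: h2; exists x.
  have hfam j : (j <= (f - d).+1)%N -> exists F, indep (d + j) F /\   forall i, (i < d + j)%N -> Rseq A B C D j.+1 (F i).
    elim: j => [|j IH] hj.
      by exists F0; rewrite addn0; split.
    have [F [hFi hFR]] := IH (ltnW hj).
    have [t [ht1 ht2]] := hex j (ltnSE hj).
    exists (fun i => if i == (d + j)%N then t else F i); split.
      rewrite addnS; exact: (indep_ext hFi hFR ht2).
    move=> i hi; case: eqP => [_|hne]; first exact: ht1.
    by apply: Rseq_mono; apply: hFR; lia.
  have [F [hFi hFR]] := hfam _ (leqnn _).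
  apply: (no_indep hdim (F := F)).
    by move=> i hi; exists (f - d).+2; apply: hFR; lia.
  have e1 : (d + (f - d).+1 = f.+1)%N by lia.
  by rewrite -e1.
have hall x : Rs A B C D x -> Rseq A B C D K x.
  move=> [k hk].
  have hx : Rseq A B C D j0.+1 x.
    case: (leqP k j0.+1) => hk'; first exact: Rseq_monoN hk' hk.
    apply: (@Rseq_stat R n m p A B C D j0.+1 hst (k - j0.+1) x); rewrite subnK //; exact: ltnW.
  by apply: Rseq_monoN hx; rewrite /K ltnS.
split => // x; split.
  move/hall => /RseqE [v [hv ->]].
  set V := @mxcol R K (fun _ => m) 1 (fun j => v j).
  have hMV : Mk A B C D K *m V = 0 by apply/kerMk.
  have [w hw] := hNspan V hMV.
  by exists w; rewrite -ctrbk_mxcol -/V hw mulmxA.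
move=> [w ->].
set V := N *m w.
pose v j := if (j < K)%N then submxcol V (inord j) else 0.
have hV : V = @mxcol R K (fun _ => m) 1 (fun j => v j).
  by rewrite -[V in LHS]submxcolK; apply: eq_mxcol => j; rewrite /v ltn_ord inord_val.
exists K; apply/RseqE; exists v; split.
  by apply/kerMk; rewrite -hV /V mulmxA hMN mul0mx.
by rewrite -mulmxA -/V hV ctrbk_mxcol.
Qed.
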